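(* Let $H\subseteq G$ be non-abelian simple groups such that the inclusion $H\subseteq G$ is a localization. Assume $G$ and $\mathrm{Aut}(G)$ are co-hopfian, $\mathrm{Aut}(H)$ is complete, and $\mathrm{Out}(G)$ is hyperabelian. Let $j\colon\mathrm{Aut}(H)\to\mathrm{Aut}(G)$ be an injective homomorphism with $j(c_h)=c_h^G$ for all $h\in H$. Let $N=j^{-1}(\mathrm{Inn}(G))$, let $k\colon\mathrm{Out}(H)\to\mathrm{Out}(G)$ be induced by $j$, and let $\pi\colon\mathrm{Out}(H)\to\mathrm{Aut}(H)/N$ be the canonical projection. Consider the conditions: (b) the only $\theta\in\mathrm{Aut}(\mathrm{Aut}(G))$ with $\theta\circ j=j$ is the identity; (c) for every homomorphism $\varphi'\colon\mathrm{Aut}(H)/N\to\mathrm{Aut}(G)$ there exists a unique homomorphism $\psi'\colon\mathrm{Out}(G)\to\mathrm{Aut}(G)$ with $\psi'\circ k=\varphi'\circ\pi$; (d) every homomorphism $\varphi\colon\mathrm{Aut}(H)\to\mathrm{Aut}(G)$ with $\mathrm{Inn}(H)\subseteq\ker\varphi$ satisfies $N\subseteq\ker\varphi$. Then $j$ is a localization if and only if (b), (c) and (d) hold. If in addition $\mathrm{Aut}(G)$ is complete, then $j$ is a localization if and only if (c) and (d) hold.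
   Context: A group homomorphism $i\colon X\to Y$ is a localization if for every homomorphism $\varphi\colon X\to Y$ there exists a unique homomorphism $\psi\colon Y\to Y$ with $\psi\circ i=\varphi$; for $H\subseteq G$, ''$H\subseteq G$ is a localization'' means the inclusion map is. A group is co-hopfian if every injective endomorphism is an automorphism; complete if it has trivial center and every automorphism is inner. A group $A$ is hyperabelian if every non-trivial quotient of $A$ has a non-trivial abelian normal subgroup. For $h\in H\subseteq G$, $c_h$ is conjugation by $h$ on $H$ and $c_h^G$ is conjugation by $h$ on $G$. $\mathrm{Out}(X)=\mathrm{Aut}(X)/\mathrm{Inn}(X)$. *)

(* Defs.v *)
(* Groups are possibly infinite, so we develop a small theory of
   setoid groups (a carrier with an equivalence relation playing the role of
   equality), which makes quotients (Out(G), Aut(H)/N) directly available. *)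
From Stdlib Require Import Setoid Morphisms.

Record grp := Grp {
  car :> Type;
  geq : car -> car -> Prop;
  gmul : car -> car -> car;
  gone : car;
  ginv : car -> car;
  geq_refl : forall x, geq x x;
  geq_sym : forall x y, geq x y -> geq y x;
  geq_trans : forall x y z, geq x y -> geq y z -> geq x z;
  gmul_compat : forall x x' y y', geq x x' -> geq y y' -> geq (gmul x y) (gmul x' y');
  ginv_compat : forall x x', geq x x' -> geq (ginv x) (ginv x');
  gmulA : forall x y z, geq (gmul x (gmul y z)) (gmul (gmul x y) z);
  gmul1l : forall x, geq (gmul gone x) x;
  gmul1r : forall x, geq (gmul x gone) x;
  gmulVl : forall x, geq (gmul (ginv x) x) gone;
  gmulVr : forall x, geq (gmul x (ginv x)) gone }.

Arguments geq {_} _ _.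
Arguments gmul {_} _ _.
Arguments gone {_}.
Arguments ginv {_} _.
Arguments geq_refl {_} _.
Arguments geq_sym {_} _ _ _.
Arguments geq_trans {_} _ _ _ _ _.
Arguments gmul_compat {_} _ _ _ _ _ _.
Arguments ginv_compat {_} _ _ _.
Arguments gmulA {_} _ _ _.
Arguments gmul1l {_} _.
Arguments gmul1r {_} _.
Arguments gmulVl {_} _.
Arguments gmulVr {_} _.

Notation "x =g y" := (geq x y) (at level 70, no associativity).
Infix "*g" := gmul (at level 40, left associativity).

#[export] Instance geq_Equiv (G : grp) : Equivalence (@geq G).
Proof. split; [exact geq_refl | exact geq_sym | exact geq_trans]. Qed.
#[export] Instance gmul_Proper (G : grp) : Proper (geq ==> geq ==> geq) (@gmul G).
Proof. intros ? ? ? ? ? ?; apply gmul_compat; assumption. Qed.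
#[export] Instance ginv_Proper (G : grp) : Proper (geq ==> geq) (@ginv G).
Proof. intros ? ? ?; apply ginv_compat; assumption. Qed.

Section GrpTheory.
Variable G : grp.
Implicit Types x y z g : G.

Lemma inv_unique x y : x *g y =g gone -> y =g ginv x.
Proof.
  intro H. rewrite <- (gmul1l y), <- (gmulVl x), <- gmulA, H, gmul1r. reflexivity.
Qed.
Lemma inv_mul x y : ginv (x *g y) =g ginv y *g ginv x.
Proof.
  symmetry; apply inv_unique. rewrite <- gmulA, (gmulA y (ginv y) (ginv x)), gmulVr,
    gmul1l, gmulVr. reflexivity.
Qed.
Lemma inv_inv x : ginv (ginv x) =g x.
Proof. symmetry; apply inv_unique; apply gmulVl. Qed.
Lemma inv_one : ginv (@gone G) =g gone.
Proof. symmetry; apply inv_unique; apply gmul1l. Qed.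
Lemma mulKV g z : ginv g *g (g *g z) =g z.
Proof. rewrite gmulA, gmulVl, gmul1l; reflexivity. Qed.
Lemma mulVK g z : g *g (ginv g *g z) =g z.
Proof. rewrite gmulA, gmulVr, gmul1l; reflexivity. Qed.
Lemma idem_one x : x *g x =g x -> x =g gone.
Proof.
  intro H. transitivity (ginv x *g (x *g x)).
  symmetry; apply mulKV. rewrite H, gmulVl. reflexivity.
Qed.
End GrpTheory.

Ltac gsimpl := repeat (rewrite <- gmulA || rewrite mulKV || rewrite mulVK
  || rewrite gmulVl || rewrite gmulVr || rewrite gmul1l || rewrite gmul1r
  || rewrite inv_mul || rewrite inv_inv || rewrite inv_one).

Definition conj (G : grp) (g x : G) : G := g *g x *g ginv g.
Arguments conj {_} _ _.

Record hom (A B : grp) := Hom {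
  hfun :> A -> B;
  hfun_compat : forall x y, x =g y -> hfun x =g hfun y;
  hfun_mul : forall x y, hfun (x *g y) =g hfun x *g hfun y }.
Arguments hfun {_ _} _ _.
Arguments hfun_compat {_ _} _ _ _ _.
Arguments hfun_mul {_ _} _ _ _.

#[export] Instance hfun_Proper A B (f : hom A B) : Proper (geq ==> geq) (hfun f).
Proof. intros ? ? ?; apply hfun_compat; assumption. Qed.

Lemma hom_one A B (f : hom A B) : f gone =g gone.
Proof. apply idem_one. rewrite <- hfun_mul, gmul1l. reflexivity. Qed.
Lemma hom_inv A B (f : hom A B) x : f (ginv x) =g ginv (f x).
Proof. apply inv_unique. rewrite <- hfun_mul, gmulVr, hom_one. reflexivity. Qed.

Definition injective {A B : grp} (f : hom A B) : Prop := forall x y, f x =g f y -> x =g y.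
Definition surjective {A B : grp} (f : hom A B) : Prop := forall y, exists x, f x =g y.

Record aut (G : grp) := Aut {
  afun :> G -> G;
  ainv : G -> G;
  afun_compat : forall x y, x =g y -> afun x =g afun y;
  ainv_compat : forall x y, x =g y -> ainv x =g ainv y;
  afun_mul : forall x y, afun (x *g y) =g afun x *g afun y;
  afun_ainv : forall x, afun (ainv x) =g x;
  ainv_afun : forall x, ainv (afun x) =g x }.
Arguments afun {_} _ _.
Arguments ainv {_} _ _.
Arguments afun_compat {_} _ _ _ _.
Arguments ainv_compat {_} _ _ _ _.
Arguments afun_mul {_} _ _ _.
Arguments afun_ainv {_} _ _.
Arguments ainv_afun {_} _ _.

#[export] Instance afun_Proper G (a : aut G) : Proper (geq ==> geq) (afun a).
Proof. intros ? ? ?; apply afun_compat; assumption. Qed.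
#[export] Instance ainv_Proper G (a : aut G) : Proper (geq ==> geq) (ainv a).
Proof. intros ? ? ?; apply ainv_compat; assumption. Qed.

Lemma ainv_mul G (a : aut G) x y : ainv a (x *g y) =g ainv a x *g ainv a y.
Proof.
  rewrite <- (ainv_afun a (ainv a x *g ainv a y)), afun_mul, !afun_ainv. reflexivity.
Qed.
Lemma aut_ginv G (a : aut G) x : a (ginv x) =g ginv (a x).
Proof. apply inv_unique. rewrite <- afun_mul, gmulVr.
  apply idem_one. rewrite <- afun_mul, gmul1l. reflexivity. Qed.

Definition aut_comp G (a b : aut G) : aut G.
Proof.
  refine (@Aut G (fun x => a (b x)) (fun x => ainv b (ainv a x)) _ _ _ _ _).
  - intros x y H; rewrite H; reflexivity.
  - intros x y H; rewrite H; reflexivity.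
  - intros x y; rewrite !afun_mul; reflexivity.
  - intro x; rewrite !afun_ainv; reflexivity.
  - intro x; rewrite !ainv_afun; reflexivity.
Defined.

Definition aut_id G : aut G.
Proof.
  refine (@Aut G (fun x => x) (fun x => x) _ _ _ _ _); intros; first [assumption | reflexivity].
Defined.

Definition aut_inv G (a : aut G) : aut G.
Proof.
  refine (@Aut G (ainv a) (afun a) _ _ _ _ _).
  - apply ainv_compat.
  - apply afun_compat.
  - apply ainv_mul.
  - apply ainv_afun.
  - apply afun_ainv.
Defined.

Definition autg (G : grp) : grp.
Proof.
  refine (@Grp (aut G) (fun a b => forall x, a x =g b x) (@aut_comp G) (aut_id G)
            (@aut_inv G) _ _ _ _ _ _ _ _ _ _); simpl.
  - intros; reflexivity.
  - intros a b H x; symmetry; apply H.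
  - intros a b c H1 H2 x; rewrite H1; apply H2.
  - intros a a' b b' H1 H2 x. rewrite H2; apply H1.
  - intros a a' H x.
    rewrite <- (afun_ainv a' x) at 1. rewrite <- H, ainv_afun. reflexivity.
  - intros; reflexivity.
  - intros; reflexivity.
  - intros; reflexivity.
  - intros a x; apply ainv_afun.
  - intros a x; apply afun_ainv.
Defined.

Definition innaut {G : grp} (g : G) : aut G.
Proof.
  refine (@Aut G (conj g) (conj (ginv g)) _ _ _ _ _); unfold conj.
  - intros x y H; rewrite H; reflexivity.
  - intros x y H; rewrite H; reflexivity.
  - intros x y; gsimpl; reflexivity.
  - intros x; gsimpl; reflexivity.
  - intros x; gsimpl; reflexivity.
Defined.

Record normal_subgroup (A : grp) (P : A -> Prop) : Prop := {
  ns_compat : forall x y, x =g y -> P x -> P y;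
  ns_one : P gone;
  ns_mul : forall x y, P x -> P y -> P (x *g y);
  ns_inv : forall x, P x -> P (ginv x);
  ns_conj : forall g x, P x -> P (g *g x *g ginv g) }.
Arguments normal_subgroup {_} _.
Arguments ns_compat {_ _} _ _ _ _ _.
Arguments ns_one {_ _} _.
Arguments ns_mul {_ _} _ _ _ _ _.
Arguments ns_inv {_ _} _ _ _.
Arguments ns_conj {_ _} _ _ _ _.

Lemma ns_eq {A : grp} {P : A -> Prop} (hP : normal_subgroup P) x y : x =g y -> P (x *g ginv y).
Proof. intro H. apply (ns_compat hP gone). rewrite H, gmulVr; reflexivity. apply (ns_one hP). Qed.

Definition quot {A : grp} {P : A -> Prop} (hP : normal_subgroup P) : grp.
Proof.
  refine (@Grp A (fun x y => P (x *g ginv y)) (@gmul A) gone (@ginv A)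
            _ _ _ _ _ _ _ _ _ _).
  - intro x; apply (ns_eq hP); reflexivity.
  - intros x y H. apply (ns_compat hP (ginv (x *g ginv y))). gsimpl; reflexivity.
    apply (ns_inv hP), H.
  - intros x y z H1 H2. apply (ns_compat hP ((x *g ginv y) *g (y *g ginv z))).
    gsimpl; reflexivity. apply (ns_mul hP); assumption.
  - intros x x' y y' H1 H2.
    apply (ns_compat hP ((x *g (y *g ginv y') *g ginv x) *g (x *g ginv x'))).
    gsimpl; reflexivity. apply (ns_mul hP); [apply (ns_conj hP) |]; assumption.
  - intros x x' H.
    apply (ns_compat hP (ginv x *g ginv (x *g ginv x') *g ginv (ginv x))).
    gsimpl; reflexivity. apply (ns_conj hP), (ns_inv hP), H.
  - intros; apply (ns_eq hP), gmulA.
  - intros; apply (ns_eq hP), gmul1l.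
  - intros; apply (ns_eq hP), gmul1r.
  - intros; apply (ns_eq hP), gmulVl.
  - intros; apply (ns_eq hP), gmulVr.
Defined.

Definition inner {G : grp} (a : aut G) : Prop := exists g : G, forall x, a x =g conj g x.

Lemma inn_normal (G : grp) : @normal_subgroup (autg G) (@inner G).
Proof.
  split.
  - intros a b Hab [g Hg]. exists g. intro x. rewrite <- (Hab x). apply Hg.
  - exists gone. intro x. simpl. unfold conj. gsimpl. reflexivity.
  - intros a b [g Hg] [h Hh]. exists (g *g h). intro x. simpl.
    rewrite Hh, Hg. unfold conj. gsimpl. reflexivity.
  - intros a [g Hg]. exists (ginv g). intro x. simpl.
    transitivity (ainv a (a (conj (ginv g) x))).
    + apply ainv_compat. rewrite Hg. unfold conj. gsimpl. reflexivity.
    + apply ainv_afun.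
  - intros b a [g Hg]. exists (b g). intro x. simpl.
    rewrite Hg. unfold conj. rewrite !afun_mul, afun_ainv, aut_ginv. reflexivity.
Qed.

Definition outg (G : grp) : grp := quot (inn_normal G).

Lemma preim_normal {A B : grp} (f : hom A B) {P : B -> Prop} (hP : normal_subgroup P) :
  @normal_subgroup A (fun x => P (f x)).
Proof.
  split.
  - intros x y H. apply (ns_compat hP). rewrite H; reflexivity.
  - apply (ns_compat hP gone). symmetry; apply hom_one. apply (ns_one hP).
  - intros x y Hx Hy. apply (ns_compat hP (f x *g f y)). symmetry; apply hfun_mul.
    apply (ns_mul hP); assumption.
  - intros x Hx. apply (ns_compat hP (ginv (f x))). symmetry; apply hom_inv.
    apply (ns_inv hP); assumption.
  - intros g x Hx. apply (ns_compat hP (f g *g f x *g ginv (f g))).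
    rewrite !hfun_mul, hom_inv; reflexivity. apply (ns_conj hP); assumption.
Qed.

Definition autH_mod_N {H G : grp} (j : hom (autg H) (autg G)) : grp :=
  quot (preim_normal j (inn_normal G)).

Definition nonabelian (A : grp) : Prop := exists x y : A, ~ (x *g y =g y *g x).

Definition simple (A : grp) : Prop :=
  (exists x : A, ~ (x =g gone)) /\
  forall P : A -> Prop, normal_subgroup P ->
    (forall x, P x -> x =g gone) \/ (forall x, P x).

Definition cohopfian (A : grp) : Prop :=
  forall f : hom A A, injective f -> surjective f.

Definition trivial_center (A : grp) : Prop :=
  forall z : A, (forall x, z *g x =g x *g z) -> z =g gone.

Definition complete (A : grp) : Prop := trivial_center A /\ forall a : aut A, inner a.

Definition hyperabelian (A : grp) : Prop :=
  forall (P : A -> Prop) (hP : normal_subgroup P),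
    (exists x : quot hP, ~ (x =g gone)) ->
    exists M : quot hP -> Prop,
      normal_subgroup M /\
      (forall x y, M x -> M y -> x *g y =g y *g x) /\
      (exists x, M x /\ ~ (x =g gone)).

Definition localization {X Y : grp} (i : hom X Y) : Prop :=
  forall phi : hom X Y, exists psi : hom Y Y,
    (forall x, psi (i x) =g phi x) /\
    (forall psi' : hom Y Y, (forall x, psi' (i x) =g phi x) -> forall y, psi' y =g psi y).

Definition cond_b {H G : grp} (j : hom (autg H) (autg G)) : Prop :=
  forall theta : aut (autg G), (forall a, theta (j a) =g j a) -> forall b, theta b =g b.

Definition cond_c {H G : grp} (j : hom (autg H) (autg G))
  (k : hom (outg H) (outg G)) (pi : hom (outg H) (autH_mod_N j)) : Prop :=
  forall phi' : hom (autH_mod_N j) (autg G),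
    exists psi' : hom (outg G) (autg G),
      (forall x, psi' (k x) =g phi' (pi x)) /\
      (forall psi'' : hom (outg G) (autg G),
          (forall x, psi'' (k x) =g phi' (pi x)) -> forall y, psi'' y =g psi' y).

Definition cond_d {H G : grp} (j : hom (autg H) (autg G)) : Prop :=
  forall phi : hom (autg H) (autg G),
    (forall a, @inner H a -> phi a =g gone) ->
    (forall a, @inner G (j a) -> phi a =g gone).

(* Main.v *)
Require Import Defs.
From Stdlib Require Import Setoid Morphisms Classical ClassicalEpsilon.
From mathcomp Require classical_sets.

Lemma zorn_sets (T:Type) (P: (T->Prop)->Prop):
  (forall F : (T -> Prop) -> Prop, (forall X, F X -> P X) ->
     (forall X Y, F X -> F Y -> (forall t, X t -> Y t) \/ (forall t, Y t -> X t)) ->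
     P (fun t => exists2 X, F X & X t)) ->
  exists A, P A /\ forall B, (forall t, A t -> B t) -> ~ (forall t, B t -> A t) -> ~ P B.
Proof.
  intro HF. destruct (@classical_sets.Zorn_bigcup T P) as [A [PA HA]].
  - intros F FP Ftot. apply (HF F FP Ftot).
  - exists A. split; [exact PA|]. intros B H1 H2 PB. apply (HA B); [split; assumption| exact PB].
Qed.

Lemma triv_normal (G : grp) : @normal_subgroup G (fun x => x =g gone).
Proof.
  split.
  - intros x y H1 H2. rewrite <- H1; exact H2.
  - reflexivity.
  - intros x y Hx Hy. rewrite Hx, Hy, gmul1l; reflexivity.
  - intros x Hx. rewrite Hx, inv_one; reflexivity.
  - intros g x Hx. rewrite Hx, gmul1r, gmulVr; reflexivity.
Qed.

Lemma ker_simple (X Y : grp) (f : hom X Y) : simple X ->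
  (forall x, f x =g gone) \/ (forall x, f x =g gone -> x =g gone).
Proof.
  intros [_ HS]. destruct (HS _ (preim_normal f (triv_normal Y))) as [H1|H1]; auto.
Qed.

Definition hcomp {A B C : grp} (f : hom A B) (g : hom B C) : hom A C.
Proof.
  refine (@Hom A C (fun x => g (f x)) _ _).
  - intros x y H; rewrite H; reflexivity.
  - intros x y; rewrite !hfun_mul; reflexivity.
Defined.

Definition hom_of_aut {G : grp} (a : aut G) : hom G G :=
  @Hom G G (afun a) (afun_compat a) (afun_mul a).

Definition projOut (G : grp) : hom (autg G) (outg G).
Proof.
  refine (@Hom (autg G) (outg G) (fun a => a) _ _).
  - intros x y Hxy. apply (ns_eq (inn_normal G)). exact Hxy.
  - intros x y. apply (@geq_refl (outg G)).
Defined.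

Definition projN {H G : grp} (j : hom (autg H) (autg G)) : hom (autg H) (autH_mod_N j).
Proof.
  refine (@Hom (autg H) (autH_mod_N j) (fun a => a) _ _).
  - intros x y Hxy. apply (ns_eq (preim_normal j (inn_normal G))). exact Hxy.
  - intros x y. apply (@geq_refl (autH_mod_N j)).
Defined.

Lemma simple_center (G : grp) : simple G -> nonabelian G -> trivial_center G.
Proof.
  intros [_ HS] [a [b Hab]].
  assert (hZ : @normal_subgroup G (fun z => forall x, z *g x =g x *g z)).
  { split.
    - intros x y Hxy Hx z. rewrite <- Hxy. apply Hx.
    - intro x. rewrite gmul1l, gmul1r; reflexivity.
    - intros x y Hx Hy z. rewrite <- gmulA, Hy, gmulA, Hx, gmulA; reflexivity.
    - intros x Hx z. transitivity (ginv x *g (z *g x) *g ginv x).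
      + gsimpl. reflexivity.
      + rewrite <- (Hx z). gsimpl. reflexivity.
    - intros g x Hx z. rewrite <- (gmulA g x), <- gmulA.
      rewrite <- (gmulA x), (Hx (ginv g *g z)). gsimpl. rewrite Hx. gsimpl. reflexivity. }
  destruct (HS _ hZ) as [H1|H1].
  - intros z Hz. apply H1, Hz.
  - exfalso. apply Hab, H1.
Qed.

Definition innhom (G : grp) : hom G (autg G).
Proof.
  refine (@Hom G (autg G) (@innaut G) _ _).
  - intros x y Hxy z. simpl. unfold conj. rewrite Hxy. reflexivity.
  - intros x y z. simpl. unfold conj. gsimpl. reflexivity.
Defined.

Lemma conj_innaut (G : grp) (b : aut G) (g : G) :
  @geq (autg G) ((b : autg G) *g innaut g *g ginv (b : autg G)) (innaut (b g)).
Proof.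
  intro z. simpl. unfold conj. rewrite !afun_mul, afun_ainv, aut_ginv. reflexivity.
Qed.

Lemma innaut_triv (G : grp) : trivial_center G -> forall g : G,
  @geq (autg G) (innaut g) gone -> g =g gone.
Proof.
  intros HZ g Hg. apply HZ. intro x. specialize (Hg x). simpl in Hg. unfold conj in Hg.
  rewrite <- Hg at 2. gsimpl. reflexivity.
Qed.

Lemma innaut_inj (G : grp) : trivial_center G -> forall g h : G,
  @geq (autg G) (innaut g) (innaut h) -> g =g h.
Proof.
  intros HZ g h Hgh.
  assert (E : g *g ginv h =g gone).
  { apply innaut_triv; [exact HZ|].
    transitivity (@gmul (autg G) (innaut g) (@ginv (autg G) (innaut h))).
    - intro z. simpl. unfold conj. gsimpl. reflexivity.
    - rewrite Hgh. apply gmulVr. }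
  transitivity (g *g ginv h *g h). gsimpl; reflexivity. rewrite E, gmul1l; reflexivity.
Qed.

Lemma comm_of_conj (X : grp) (u v w : X) :
  u *g w *g ginv u =g v *g w *g ginv v -> (ginv u *g v) *g w =g w *g (ginv u *g v).
Proof.
  intro E. transitivity (ginv u *g (v *g w *g ginv v) *g v). gsimpl; reflexivity.
  rewrite <- E. gsimpl; reflexivity.
Qed.

Lemma comm_conj (X : grp) (a b c : X) :
  b *g (a *g c *g ginv a) =g (a *g c *g ginv a) *g b ->
  (ginv a *g b *g a) *g c =g c *g (ginv a *g b *g a).
Proof.
  intro E. transitivity (ginv a *g (b *g (a *g c *g ginv a)) *g a). gsimpl; reflexivity.
  rewrite E. gsimpl; reflexivity.
Qed.

Lemma comm_triv_conj (X : grp) (b c : X) : b *g c =g c *g b -> b *g c *g ginv b =g c.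
Proof. intro E. rewrite E. gsimpl. reflexivity. Qed.

Lemma eq_of_div (X : grp) (x y : X) : x *g ginv y =g gone -> x =g y.
Proof. intro E. transitivity (x *g ginv y *g y). gsimpl; reflexivity. rewrite E, gmul1l; reflexivity. Qed.

Lemma cent_iH (H G : grp) (i : hom H G) : localization i -> trivial_center G ->
  forall b : aut G, (forall h, @geq (autg G) (@gmul (autg G) b (innaut (i h))) (@gmul (autg G) (innaut (i h)) b)) ->
  forall x, b x =g x.
Proof.
  intros Hloc HZ b Hb.
  assert (Hfix : forall h, b (i h) =g i h).
  { intro h. apply innaut_inj; [exact HZ|].
    rewrite <- conj_innaut. apply comm_triv_conj. apply Hb. }
  destruct (Hloc i) as [psi [_ Hu]].
  intro x. transitivity (psi x).
  - apply (Hu (hom_of_aut b)). exact Hfix.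
  - symmetry. apply (Hu (@Hom G G (fun x => x) (fun x y H => H) (fun x y => geq_refl _))).
    intro; reflexivity.
Qed.

Definition projQ {A : grp} {P : A -> Prop} (hP : normal_subgroup P) : hom A (quot hP).
Proof.
  refine (@Hom A (quot hP) (fun a => a) _ _).
  - intros x y Hxy. apply (ns_eq hP). exact Hxy.
  - intros x y. apply (@geq_refl (quot hP)).
Defined.

Section Hyper.
Variables (A X : grp) (f : hom X A).
Hypotheses (hA : hyperabelian A) (sX : simple X) (nX : nonabelian X).

Definition Fam (Y : A -> Prop) : Prop :=
  normal_subgroup (fun x => x =g gone \/ Y x) /\
  (forall h, (f h =g gone \/ Y (f h)) -> h =g gone).

Lemma fam_chain (K : forall x, f x =g gone -> x =g gone) (F : (A -> Prop) -> Prop) : (forall Y, F Y -> Fam Y) ->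
  (forall Y Z, F Y -> F Z -> (forall t, Y t -> Z t) \/ (forall t, Z t -> Y t)) ->
  Fam (fun t => exists2 Y, F Y & Y t).
Proof.
  intros FF Ftot.
  set (U := fun t => exists2 Y, F Y & Y t).
  assert (one : forall x, x =g gone \/ U x -> x =g gone \/ exists2 Y, F Y & Y x).
  { intros x [Hx|Hx]; [left; exact Hx | right; exact Hx]. }
  assert (two : forall x y, x =g gone \/ U x -> y =g gone \/ U y ->
    (x =g gone /\ y =g gone) \/ exists2 Y, F Y & ((x =g gone \/ Y x) /\ (y =g gone \/ Y y))).
  { intros x y [Hx|[Y FY Hx]] [Hy|[Z FZ Hy]].
    - left; split; assumption.
    - right; exists Z; auto.
    - right; exists Y; auto.
    - right. destruct (Ftot Y Z FY FZ) as [S|S].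
      + exists Z; auto.
      + exists Y; auto. }
  split; [split|].
  - intros x y Hxy Hx. destruct (one x Hx) as [E|[Y FY HY]].
    + left. rewrite <- Hxy; exact E.
    + destruct (ns_compat (proj1 (FF Y FY)) x y Hxy (or_intror HY)) as [E|E].
      left; exact E. right; exists Y; assumption.
  - left; reflexivity.
  - intros x y Hx Hy. destruct (two x y Hx Hy) as [[E1 E2]|[Y FY [H1 H2]]].
    + left. rewrite E1, E2, gmul1l; reflexivity.
    + destruct (ns_mul (proj1 (FF Y FY)) x y H1 H2) as [E|E].
      left; exact E. right; exists Y; assumption.
  - intros x Hx. destruct (one x Hx) as [E|[Y FY HY]].
    + left. rewrite E, inv_one; reflexivity.
    + destruct (ns_inv (proj1 (FF Y FY)) x (or_intror HY)) as [E|E].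
      left; exact E. right; exists Y; assumption.
  - intros g x Hx. destruct (one x Hx) as [E|[Y FY HY]].
    + left. rewrite E, gmul1r, gmulVr; reflexivity.
    + destruct (ns_conj (proj1 (FF Y FY)) g x (or_intror HY)) as [E|E].
      left; exact E. right; exists Y; assumption.
  - intros h [E|[Y FY HY]].
    + apply K; exact E.
    + apply (proj2 (FF Y FY)). right; exact HY.
Qed.

Lemma hyper_kill : forall x, f x =g gone.
Proof.
  destruct (ker_simple _ _ f sX) as [K|K]; [exact K|]. exfalso.
  destruct (@zorn_sets A Fam) as [A0 [[hP0 meet0] max0]].
  { intros F FF Ftot. apply fam_chain; assumption. }
  set (P := fun x => x =g gone \/ A0 x) in *.
  destruct (proj1 sX) as [h0 Hh0].
  assert (notP : forall x : A, P x -> ~ @geq (quot hP0) x gone -> False).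
  { intros x Px Hn. apply Hn. simpl. apply (ns_compat hP0 x). gsimpl; reflexivity. exact Px. }
  destruct (hA P hP0) as [M [hM [Mab [x0 [Mx0 Nx0]]]]].
  { exists (f h0). intro E. apply Hh0. apply meet0.
    destruct (ns_compat hP0 (f h0 *g ginv gone) (f h0) ltac:(gsimpl; reflexivity) E) as [E'|E']; auto. }
  assert (Mof : forall x : A, x =g gone \/ M x -> M x).
  { intros x [E|E]; [|exact E].
    apply (ns_compat hM gone). simpl. apply (ns_eq hP0). symmetry; exact E. apply (ns_one hM). }
  apply (max0 M).
  - intros t Ht. apply (ns_compat hM gone). 2: apply (ns_one hM).
    apply (@geq_sym (quot hP0)). simpl. apply (ns_compat hP0 t). gsimpl. reflexivity. right; exact Ht.
  - intro S. apply (notP x0). right; apply S; exact Mx0. exact Nx0.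
  - split.
    + split.
      * intros x y Hxy Hx. right. apply (ns_compat hM x). simpl. apply (ns_eq hP0). exact Hxy.
        apply Mof; exact Hx.
      * left; reflexivity.
      * intros x y Hx Hy. right. apply (ns_mul hM); apply Mof; assumption.
      * intros x Hx. right. apply (ns_inv hM); apply Mof; assumption.
      * intros g x Hx. right. apply (ns_conj hM); apply Mof; assumption.
    + intros h Hh. apply Mof in Hh.
      destruct (proj2 sX _ (preim_normal (hcomp f (projQ hP0)) hM)) as [K2|K2].
      * apply K2; exact Hh.
      * exfalso. destruct nX as [a [b Hab]]. apply Hab. apply eq_of_div.
        assert (Pc : P (f (a *g b *g ginv (b *g a)))).
        { apply (ns_compat hP0 (f a *g f b *g ginv (f b *g f a))).
          rewrite !hfun_mul, hom_inv, hfun_mul. reflexivity.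
          apply (Mab (f a) (f b) (K2 a) (K2 b)). }
        apply meet0. destruct Pc; auto.
Qed.
End Hyper.

Lemma conj_comm (X : grp) (b c : X) : b *g c *g ginv b =g c -> b *g c =g c *g b.
Proof. intro E. rewrite <- E at 2. gsimpl. reflexivity. Qed.

Lemma conj_triv (X : grp) (a b : X) : ginv a *g b *g a =g gone -> b =g gone.
Proof. intro E. transitivity (a *g (ginv a *g b *g a) *g ginv a). gsimpl; reflexivity.
  rewrite E. gsimpl. reflexivity. Qed.

Lemma div_eq (X : grp) (u v : X) : ginv u *g v =g gone -> u =g v.
Proof. intro E. symmetry. transitivity (u *g (ginv u *g v)). gsimpl; reflexivity. rewrite E; gsimpl; reflexivity. Qed.

Lemma hom_conj (X Y : grp) (F : hom X Y) (a b : X) :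
  F a *g F b *g ginv (F a) =g F (a *g b *g ginv a).
Proof. rewrite !hfun_mul, hom_inv. reflexivity. Qed.

Definition idhom (X : grp) : hom X X := @Hom X X (fun x => x) (fun x y H => H) (fun x y => geq_refl _).

Lemma aut_inj (X : grp) (a : aut X) x y : a x =g a y -> x =g y.
Proof. intro E. rewrite <- (ainv_afun a x), <- (ainv_afun a y), E. reflexivity. Qed.

Definition aut_of_bij (X : grp) (f : hom X X) (fi : injective f) (fs : surjective f) : aut X.
Proof.
  pose (g := fun y => proj1_sig (constructive_indefinite_description _ (fs y))).
  assert (gs : forall y, f (g y) =g y) by (intro y; exact (proj2_sig (constructive_indefinite_description _ (fs y)))).
  refine (@Aut X f g (hfun_compat f) _ (hfun_mul f) gs _).
  - intros x y Hxy. apply fi. rewrite !gs. exact Hxy.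
  - intro x. apply fi. rewrite gs. reflexivity.
Defined.

Lemma aut_of_bij_eq (X : grp) f fi fs x : @aut_of_bij X f fi fs x = f x.
Proof. reflexivity. Qed.

Lemma hom_injective (X Y : grp) (f : hom X Y) : (forall x, f x =g gone -> x =g gone) -> injective f.
Proof.
  intros K x y E. apply eq_of_div, K. rewrite hfun_mul, hom_inv, E, gmulVr. reflexivity.
Qed.

Section Main.
Variables (H G : grp) (i : hom H G) (j : hom (autg H) (autg G))
  (k : hom (outg H) (outg G)) (pi : hom (outg H) (autH_mod_N j)).
Hypotheses (iinj : injective i) (iloc : localization i) (sH : simple H) (nH : nonabelian H)
  (sG : simple G) (nG : nonabelian G) (cG : cohopfian G) (cA : cohopfian (autg G))
  (hyp : hyperabelian (outg G)) (hj : forall h : H, j (innaut h) =g innaut (i h))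
  (hk : forall a : outg H, @geq (outg G) (k a) (j a))
  (hpi : forall a : outg H, @geq (autH_mod_N j) (pi a) a).

Let zG : trivial_center G := simple_center G sG nG.

Lemma kill (psi : hom (autg G) (autg G)) :
  (forall h, psi (innaut (i h)) =g gone) -> forall a, @inner G a -> psi a =g gone.
Proof.
  intros Hh a [g Hg].
  destruct (ker_simple _ _ (hcomp (innhom G) psi) sG) as [K|K].
  - transitivity (psi (innaut g)). apply hfun_compat. exact Hg. apply K.
  - exfalso. destruct (proj1 sH) as [h0 Hh0]. apply Hh0. apply iinj.
    rewrite hom_one. apply K. apply Hh.
Qed.

Definition factOut (psi : hom (autg G) (autg G)) (Hk : forall a, @inner G a -> psi a =g gone) :
  hom (outg G) (autg G).
Proof.
  refine (@Hom (outg G) (autg G) (fun a => psi a) _ (hfun_mul psi)).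
  intros x y Hxy. apply eq_of_div. rewrite <- hom_inv, <- hfun_mul. apply Hk. exact Hxy.
Defined.

Definition factN (phi : hom (autg H) (autg G)) (Hk : forall a, @inner G (j a) -> phi a =g gone) :
  hom (autH_mod_N j) (autg G).
Proof.
  refine (@Hom (autH_mod_N j) (autg G) (fun a => phi a) _ (hfun_mul phi)).
  intros x y Hxy. apply eq_of_div. rewrite <- hom_inv, <- hfun_mul. apply Hk. exact Hxy.
Defined.

Lemma innN (h : H) : @geq (autH_mod_N j) (innaut h) gone.
Proof.
  simpl. apply (ns_compat (inn_normal G) (innaut (i h))).
  - change (@geq (autg G) (innaut (i h)) (j (@gmul (autg H) (innaut h) (@ginv (autg H) (@gone (autg H)))))).
    rewrite hfun_mul, hom_inv, hom_one, hj. symmetry. apply (@gmul1r (autg G)). 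
  - exists (i h). intro; reflexivity.
Qed.


Lemma fwd_b : localization j -> cond_b j.
Proof.
  intros L th Hth b. destruct (L j) as [psi [_ Hu]].
  transitivity (psi b). apply (Hu (hom_of_aut th)). exact Hth.
  symmetry. apply (Hu (idhom _)). intro; reflexivity.
Qed.

Lemma kill_of (psi : hom (autg G) (autg G)) (phi : hom (autg H) (autg G)) :
  (forall x, psi (j x) =g phi x) -> (forall h, phi (innaut h) =g gone) ->
  forall a, @inner G a -> psi a =g gone.
Proof.
  intros E K. apply kill. intro h. rewrite <- hj, E. apply K.
Qed.

Lemma fwd_d : localization j -> cond_d j.
Proof.
  intros L phi Hphi a Ha. destruct (L phi) as [psi [Hpsi _]].
  rewrite <- Hpsi. apply (kill_of psi phi Hpsi); [|exact Ha].
  intro h. apply Hphi. exists h. intro; reflexivity.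
Qed.

Lemma fwd_c : localization j -> cond_c j k pi.
Proof.
  intros L phi'. destruct (L (hcomp (projN j) phi')) as [psi [Hpsi Hu]].
  assert (Hk : forall a, @inner G a -> psi a =g gone).
  { apply (kill_of psi _ Hpsi). intro h.
    transitivity (phi' gone). apply (hfun_compat phi'). apply innN. apply hom_one. }
  exists (factOut psi Hk). split.
  - intro x. transitivity (psi (j x)).
    + apply (hfun_compat (factOut psi Hk)). apply hk.
    + rewrite Hpsi. symmetry. apply (hfun_compat phi'). apply hpi.
  - intros psi'' H2 y.
    apply (Hu (hcomp (projOut G) psi'')). intro x.
    transitivity (psi'' (k x)).
    + apply (hfun_compat psi'' (j x) (k x)). apply (@geq_sym (outg G)). apply hk.
    + rewrite H2. apply (hfun_compat phi'). apply hpi.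
Qed.

Lemma bwd_A (phi : hom (autg H) (autg G)) : cond_c j k pi -> cond_d j ->
  (forall h, phi (innaut h) =g gone) ->
  exists psi : hom (autg G) (autg G),
    (forall x, psi (j x) =g phi x) /\
    (forall psi' : hom (autg G) (autg G), (forall x, psi' (j x) =g phi x) -> forall y, psi' y =g psi y).
Proof.
  intros Hc Hd Kall.
  assert (Hinn : forall a, @inner H a -> phi a =g gone).
  { intros a [h Hh]. transitivity (phi (innaut h)). apply hfun_compat. exact Hh. apply Kall. }
  pose proof (Hd phi Hinn) as HN.
  destruct (Hc (factN phi HN)) as [psi' [Hpsi' Hu']].
  exists (hcomp (projOut G) psi'). split.
  - intro x. transitivity (psi' (k x)).
    + apply (hfun_compat psi' (j x) (k x)). apply (@geq_sym (outg G)). apply hk.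
    + rewrite Hpsi'. apply (hfun_compat (factN phi HN)). apply hpi.
  - intros psi2 H2 y.
    assert (Hk2 : forall a, @inner G a -> psi2 a =g gone) by (apply (kill_of psi2 phi H2 Kall)).
    apply (Hu' (factOut psi2 Hk2)). intro x. transitivity (psi2 (j x)).
    + apply (hfun_compat (factOut psi2 Hk2)). apply hk.
    + rewrite H2. symmetry. apply (hfun_compat (factN phi HN)). apply hpi.
Qed.
Lemma bwd_B (phi : hom (autg H) (autg G)) : cond_b j ->
  (forall h, phi (innaut h) =g gone -> h =g gone) ->
  exists psi : hom (autg G) (autg G),
    (forall x, psi (j x) =g phi x) /\
    (forall psi' : hom (autg G) (autg G), (forall x, psi' (j x) =g phi x) -> forall y, psi' y =g psi y).
Proof.
  intros Hb Kt.
  assert (Hin : forall h, @inner G (phi (innaut h))).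
  { intro h. pose proof (hyper_kill (outg G) H (hcomp (hcomp (innhom H) phi) (projOut G)) hyp sH nH h) as E.
    apply (ns_compat (inn_normal G) _ _ ltac:(intro z; reflexivity) E). }
  pose (fs h := proj1_sig (constructive_indefinite_description _ (Hin h))).
  assert (Hfs : forall h, @geq (autg G) (phi (innaut h)) (innaut (fs h)))
    by (intro h; exact (proj2_sig (constructive_indefinite_description _ (Hin h)))).
  assert (fc : forall x y, x =g y -> fs x =g fs y).
  { intros x y E. apply (innaut_inj G zG). rewrite <- !Hfs. apply hfun_compat.
    apply (hfun_compat (innhom H)). exact E. }
  assert (fm : forall x y, fs (x *g y) =g fs x *g fs y).
  { intros x y. apply (innaut_inj G zG). transitivity (phi (innaut (x *g y))).
    symmetry; apply Hfs.
    transitivity (@gmul (autg G) (phi (innaut x)) (phi (innaut y))).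
    { rewrite <- hfun_mul. apply hfun_compat. apply (hfun_mul (innhom H)). }
    rewrite !Hfs. symmetry. apply (hfun_mul (innhom G)). }
  destruct (iloc (@Hom H G fs fc fm)) as [al [Hal _]].
  assert (alinj : injective al).
  { apply hom_injective. destruct (ker_simple _ _ al sG) as [K|K]; [|exact K]. exfalso.
    destruct (proj1 sH) as [h0 Hh0]. apply Hh0, Kt. rewrite Hfs.
    transitivity (@innaut G gone). apply (hfun_compat (innhom G)). rewrite <- (Hal h0). apply K.
    apply (hom_one _ _ (innhom G)). }
  pose (ala := aut_of_bij G al alinj (cG al alinj)).
  pose (psi := hom_of_aut (@innaut (autg G) ala)).
  assert (Hpi : forall h, psi (innaut (i h)) =g phi (innaut h)).
  { intro h. transitivity (innaut (ala (i h))). apply conj_innaut. rewrite Hfs.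
    apply (hfun_compat (innhom G)). apply Hal. }
  assert (Hex : forall a, psi (j a) =g phi a).
  { intro a. apply div_eq. apply (conj_triv (autg G) ala).
    intro x. apply (cent_iH H G i iloc zG).
    intro h. apply comm_conj.
    assert (Ew : @geq (autg G) (@gmul (autg G) (@gmul (autg G) ala (innaut (i h))) (@ginv (autg G) ala)) (phi (innaut h)))
      by exact (Hpi h).
    rewrite Ew. apply comm_of_conj.
    transitivity (phi (innaut (a h))).
    - rewrite <- Hpi, <- hj, hom_conj, hom_conj, conj_innaut, hj. apply Hpi.
    - rewrite hom_conj, conj_innaut. reflexivity. }
  exists psi. split; [exact Hex|].
  intros psi2 H2.
  assert (K2 : forall g, psi2 (innaut g) =g gone -> g =g gone).
  { destruct (ker_simple _ _ (hcomp (innhom G) psi2) sG) as [K|K]; [|exact K].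
    exfalso. destruct (proj1 sH) as [h0 Hh0]. apply Hh0, Kt. rewrite <- H2, hj. apply K. }
  assert (inj2 : injective psi2).
  { apply hom_injective. intros b Hb' g. change (b g =g g).
    apply eq_of_div. apply K2.
    transitivity (psi2 (@gmul (autg G) (@gmul (autg G) (@gmul (autg G) b (innaut g)) (@ginv (autg G) b)) (@ginv (autg G) (innaut g)))).
    - apply hfun_compat. rewrite conj_innaut. symmetry.
      intro z. simpl. unfold conj. gsimpl. reflexivity.
    - rewrite !hfun_mul, !hom_inv, Hb'. gsimpl. reflexivity. }
  pose (psinv := hom_of_aut (@innaut (autg G) (@ginv (autg G) ala))).
  pose (th := hcomp psi2 psinv).
  assert (thinj : injective th).
  { intros x y E. apply inj2. apply (aut_inj _ (@innaut (autg G) (@ginv (autg G) ala))). exact E. }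
  pose (tha := aut_of_bij (autg G) th thinj (cA th thinj)).
  assert (Hth : forall a, tha (j a) =g j a).
  { intro a. change (@geq (autg G) (psinv (psi2 (j a))) (j a)). rewrite H2, <- Hex.
    exact (ainv_afun (@innaut (autg G) ala) (j a)). }
  intro y. pose proof (Hb tha Hth y) as Ey.
  transitivity (psi (psinv (psi2 y))).
  - symmetry. exact (afun_ainv (@innaut (autg G) ala) (psi2 y)).
  - apply hfun_compat. exact Ey.
Qed.
Lemma b_of_complete : complete (autg G) -> cond_b j.
Proof.
  intros [_ Hc] th Hth b. destruct (Hc th) as [be Hbe].
  assert (Hbe1 : forall x, be x =g x).
  { apply (cent_iH H G i iloc zG be). intro h. apply conj_comm.
    transitivity (th (innaut (i h))). symmetry; apply Hbe.
    rewrite <- hj. apply Hth. }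
  rewrite Hbe. intro x. change (be (b (ainv be x)) =g b x). rewrite Hbe1. apply afun_compat.
  rewrite <- (Hbe1 (ainv be x)) at 1. apply afun_ainv.
Qed.

Lemma main_sec :
  (localization j <-> cond_b j /\ cond_c j k pi /\ cond_d j) /\
  (complete (autg G) -> (localization j <-> cond_c j k pi /\ cond_d j)).
Proof.
  assert (E1 : localization j <-> cond_b j /\ cond_c j k pi /\ cond_d j).
  { split.
    - intro L. split; [exact (fwd_b L)|split; [exact (fwd_c L)| exact (fwd_d L)]].
    - intros [Hb [Hc Hd]] phi. destruct (ker_simple _ _ (hcomp (innhom H) phi) sH) as [K|K].
      + apply bwd_A; auto.
      + apply bwd_B; auto. }
  split; [exact E1|]. intro Hc. pose proof (b_of_complete Hc). rewrite E1. tauto.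
Qed.
End Main.

Theorem theorem3p5 (H G : grp) (i : hom H G)
  (j : hom (autg H) (autg G))
  (k : hom (outg H) (outg G))
  (pi : hom (outg H) (autH_mod_N j)) :
  injective i -> localization i ->
  simple H -> nonabelian H -> simple G -> nonabelian G ->
  cohopfian G -> cohopfian (autg G) -> complete (autg H) -> hyperabelian (outg G) ->
  injective j ->
  (forall h : H, j (innaut h) =g innaut (i h)) ->
  (forall a : outg H, @geq (outg G) (k a) (j a)) ->
  (forall a : outg H, @geq (autH_mod_N j) (pi a) a) ->
  (localization j <-> cond_b j /\ cond_c j k pi /\ cond_d j) /\
  (complete (autg G) -> (localization j <-> cond_c j k pi /\ cond_d j)).
Proof.
  intros. eapply main_sec; eassumption.
Qed.
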